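(* For any integers $r,t\ge 3$, $(K_r\times K_t)_{SR}\cong K_r\square K_t$.
   Context: $K_n$ is the complete graph on $n$ vertices. The direct product $G\times H$ has vertex set $V(G)\times V(H)$, with $(a,b)\sim(c,d)$ iff $ac\in E(G)$ and $bd\in E(H)$; the Cartesian product $G\square H$ has vertex set $V(G)\times V(H)$, with $(a,b)\sim(c,d)$ iff ($a=c$ and $bd\in E(H)$) or ($b=d$ and $ac\in E(G)$). For a connected graph $F$ with distance $d_F$, a vertex $u$ is maximally distant from $v$ if $d_F(v,w)\le d_F(u,v)$ for every neighbor $w$ of $u$; distinct $u,v$ are mutually maximally distant if each is maximally distant from the other; the boundary $\partial(F)$ is the set of vertices mutually maximally distant with some vertex; the strong resolving graph $F_{SR}$ has vertex set $\partial(F)$, two vertices adjacent iff they are mutually maximally distant in $F$. *)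

(* Defs.v *)
From mathcomp Require Import all_boot.
Set Implicit Arguments. Unset Strict Implicit. Unset Printing Implicit Defensive.

Section Graphs.
Variable T : finType.
Implicit Types (e : rel T) (u v w : T).

Definition walk_of_len e k u v : bool :=
  [exists p : k.-tuple T, path e u p && (last u p == v)].

(* distance: least k with a walk of length k from u to v; for a connected
   graph this is the usual graph distance (always < #|T|).  If no walk exists
   the value #|T| is returned (irrelevant for connected graphs). *)
Definition dist e u v : nat :=
  find (fun k => walk_of_len e k u v) (iota 0 #|T|).

Definition connected_graph e : Prop := forall u v, connect e u v.

Definition max_distant e u v : bool :=
  [forall w, e u w ==> (dist e v w <= dist e u v)].

Definition mmd e u v : bool :=
  [&& u != v, max_distant e u v & max_distant e v u].

(* boundary = vertex set of the strong resolving graph *)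
Definition boundary e : {set T} := [set u | [exists v, mmd e u v]].
End Graphs.

Definition complete (n : nat) : rel 'I_n := fun a b => a != b.

Definition dirprod (T1 T2 : finType) (e1 : rel T1) (e2 : rel T2) : rel (T1 * T2) :=
  fun x y => e1 x.1 y.1 && e2 x.2 y.2.

Definition cartprod (T1 T2 : finType) (e1 : rel T1) (e2 : rel T2) : rel (T1 * T2) :=
  fun x y => ((x.1 == y.1) && e2 x.2 y.2) || ((x.2 == y.2) && e1 x.1 y.1).

Definition iso_to_induced (S T : finType) (e2 : rel S) (A : {set T}) (e1 : rel T)
  : Prop :=
  exists f : S -> T,
    [/\ injective f, f @: [set: S] = A & forall x y, e2 x y = e1 (f x) (f y)].

(* F_SR is isomorphic to H : vertex set boundary F, edges = mmd in F *)
Definition SR_iso (S T : finType) (F : rel T) (H : rel S) : Prop :=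
  iso_to_induced H (boundary F) (mmd F).
Arguments complete n : clear implicits.

(* Main.v *)
Require Import Defs.
From mathcomp Require Import all_boot.
Set Implicit Arguments. Unset Strict Implicit. Unset Printing Implicit Defensive.

Section Gen.
Variable T : finType.
Variable e : rel T.

Lemma dist_le k u v : walk_of_len e k u v -> k < #|T| -> dist e u v <= k.
Proof.
move=> W Hk; rewrite leqNgt; apply/negP => Hlt.
have := before_find 0 Hlt; rewrite nth_iota // add0n W //.
Qed.

Lemma dist_ge m u v : m <= #|T| -> (forall k, k < m -> ~~ walk_of_len e k u v) ->
  m <= dist e u v.
Proof.
move=> Hm H; rewrite leqNgt; apply/negP => Hlt.
have Hs : dist e u v < size (iota 0 #|T|) by rewrite size_iota; exact: leq_trans Hlt Hm.
have Hh : has (fun k => walk_of_len e k u v) (iota 0 #|T|) by rewrite has_find.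
have := nth_find 0 Hh.
rewrite nth_iota; last by move: Hs; rewrite size_iota.
rewrite add0n => W; have := H _ Hlt; by rewrite /dist W.
Qed.

Lemma walk0 u v : walk_of_len e 0 u v -> u = v.
Proof. by case/existsP => -[[|x s] //= _] /eqP. Qed.

Lemma walk1 u v : walk_of_len e 1 u v -> e u v.
Proof. by case/existsP => -[[|x [|y s]] //= _] /andP [/andP [H _] /eqP <-]. Qed.

Lemma walk1I u v : e u v -> walk_of_len e 1 u v.
Proof. by move=> H; apply/existsP; exists [tuple v]; rewrite /= H eqxx. Qed.

Lemma walk2I u w v : e u w -> e w v -> walk_of_len e 2 u v.
Proof. by move=> H1 H2; apply/existsP; exists [tuple w; v]; rewrite /= H1 H2 eqxx. Qed.
End Gen.

Lemma avoid2 n (a c : 'I_n) : 3 <= n -> exists x : 'I_n, (x != a) && (x != c).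
Proof.
move=> Hn; case: (pickP [pred x : 'I_n | x \notin [set a; c]]) => [x /=|H].
  by rewrite !inE negb_or => Hx; exists x.
have : #|[set a; c]| = #|'I_n|.
  apply: eq_card => x; have := H x => /= /negbFE ->; by [].
rewrite card_ord => E; have := cards2 a c; rewrite E => E2.
have : n <= 2 by rewrite E2; case: (a != c).
move=> Hn2; exfalso; move: Hn Hn2; clear; by case: n => [|[|[|]]].
Qed.

Theorem lemma32 (r t : nat) :
  3 <= r -> 3 <= t ->
  SR_iso (dirprod (complete r) (complete t)) (cartprod (complete r) (complete t)).
Proof.
move=> Hr Ht.
set e := dirprod (complete r) (complete t).
have eE : forall x y, e x y = (x.1 != y.1) && (x.2 != y.2) by [].
have cardT : 2 < #|{: 'I_r * 'I_t}|.
  rewrite card_prod !card_ord; apply: (leq_trans _ (leq_mul Hr Ht)); by [].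
have w2 : forall u v, walk_of_len e 2 u v.
  move=> [a b] [c d].
  have [x /andP [x1 x2]] := avoid2 a c Hr.
  have [y /andP [y1 y2]] := avoid2 b d Ht.
  apply: (walk2I (w := (x, y))); rewrite eE /=; first by rewrite eq_sym x1 eq_sym y1.
  by rewrite x2 y2.
have dle2 : forall u v, dist e u v <= 2 by move=> u v; apply: dist_le.
have dge2 : forall u v, u != v -> ~~ e u v -> 2 <= dist e u v.
  move=> u v Huv Heuv; apply: dist_ge; first exact: ltnW.
  move=> [|[|k]] // _; apply/negP.
    by move/walk0 => E; rewrite E eqxx in Huv.
  by move/walk1 => E; rewrite E in Heuv.
have mmdE : forall u v, mmd e u v = (u != v) && ~~ e u v.
  move=> u v; rewrite /mmd.
  case Huv: (u != v) => //=.
  case He: (e u v) => /=.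
    apply/negP => /andP [/forallP H _].
    move: u v Huv He H => [a b] [c d] _; rewrite eE /= => /andP [ac bd] H.
    have [y /andP [y1 y2]] := avoid2 b d Ht.
    have y1' : b != y by rewrite eq_sym.
    have E3 : e (a, b) (c, y) by rewrite eE /= ac y1'.
    have H3 := implyP (H (c, y)) E3.
    have D1 : dist e (a,b) (c,d) <= 1.
      apply: dist_le; last exact: ltnW cardT.
      by apply: walk1I; rewrite eE /= ac bd.
    have D2 : 2 <= dist e (c, d) (c, y).
      apply: dge2; first by rewrite xpair_eqE eqxx /= eq_sym.
      by rewrite eE /= eqxx.
    by have := leq_trans D2 (leq_trans H3 D1).
  have Hvu : v != u by rewrite eq_sym Huv.
  have He' : ~~ e v u by rewrite eE eq_sym [v.2 == _]eq_sym -eE He.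
  have D : 2 <= dist e u v := dge2 u v Huv (negbT He).
  have D' : 2 <= dist e v u := dge2 v u Hvu He'.
  apply/andP; split; apply/forallP => w; apply/implyP => _.
    exact: leq_trans (dle2 _ _) D.
  exact: leq_trans (dle2 _ _) D'.
exists id; split.
- by [].
- apply/setP => u; have Hu : u \in id @: [set: _] := imset_f id (in_setT u).
  rewrite Hu inE; symmetry; apply/existsP.
  have [y /andP [y1 _]] := avoid2 u.2 u.2 Ht.
  exists (u.1, y); rewrite mmdE eE /= eqxx /= andbT.
  by clear Hu; case: u y1 => a b /= y1; rewrite xpair_eqE eqxx /= eq_sym y1.
- move=> [a b] [c d]; rewrite mmdE eE /cartprod /complete /= xpair_eqE.
  by case: (a == c); case: (b == d).
Qed.
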